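(* Let $G=(V,E)$ be a finite connected graph (loops allowed) and let $W_0=(G,w^0)$ and $W_1=(G,w^1)$ be two networks on $G$ such that there is a vertex $v\in V$ with $w^0_{v,v}<w^1_{v,v}$, and $w^0_{u,x}=w^1_{u,x}$ for every other edge $(u,x)\neq(v,v)$. Denote by $\gamma^0$ and $\gamma^1$ the spectral gaps of the random walks on $W_0$ and $W_1$ respectively. Then $\gamma^1\le\gamma^0$.
   Context: A network $(G,w)$ is a connected graph with nonnegative edge weights $w$ (including possibly weights $w_{v,v}$ on self-loops). The random walk on it moves from $u$ to $x$ with probability proportional to $w_{u,x}$; its stationary distribution is $\pi(u)=w_u/Z$ with $w_u=\sum_{e\ni u}w_e$ and $Z=\sum_u w_u$. The spectral gap is $1-\lambda_2$, where $\lambda_2$ is the second largest eigenvalue of the (reversible) transition matrix. *)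

(* Defs.v *)
From HB Require Import structures.
From mathcomp Require Import all_boot all_order all_algebra.
From mathcomp Require Import polyrcf.
Set Implicit Arguments. Unset Strict Implicit. Unset Printing Implicit Defensive.
Import Order.TTheory GRing.Theory Num.Theory.
Local Open Scope ring_scope.

(* Vertices are 'I_n.  A graph is an adjacency relation G (loops allowed);
   edge weights are a function w : 'I_n -> 'I_n -> R, with w u x = w_{u,x}. *)

Definition sym_graph n (G : rel 'I_n) := forall u x, G u x = G x u.
Definition connected_graph n (G : rel 'I_n) := forall u x, connect G u x.

(* w_u = sum_{e ∋ u} w_e (a loop at u contributes w_{u,u} once) *)
Definition wdeg (R : numDomainType) n (w : 'I_n -> 'I_n -> R) (u : 'I_n) : R :=
  \sum_(x < n) w u x.

(* (G,w) is a network: nonnegative symmetric weights supported on the edges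
   of G; we also require w_u > 0 so that the random walk is well defined. *)
Definition is_network (R : numDomainType) n (G : rel 'I_n)
    (w : 'I_n -> 'I_n -> R) :=
  [/\ forall u x, w u x = w x u,
      forall u x, 0 <= w u x,
      forall u x, w u x != 0 -> G u x
    & forall u, 0 < wdeg w u].

Definition transition (R : numFieldType) n (w : 'I_n -> 'I_n -> R) : 'M[R]_n :=
  \matrix_(u, x) (w u x / wdeg w u).

Definition eigenvalues (R : rcfType) n (A : 'M[R]_n) : seq R :=
  flatten [seq nseq (mup x (char_poly A)) x | x <- rootsR (char_poly A)].

Definition lambda2 (R : rcfType) n (A : 'M[R]_n) : R :=
  nth 0 (sort (fun x y : R => y <= x) (eigenvalues A)) 1.

Definition spectral_gap (R : rcfType) n (w : 'I_n -> 'I_n -> R) : R :=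
  1 - lambda2 (transition w).

(* Main.v *)
Require Import Defs.
From HB Require Import structures.
From mathcomp Require Import all_boot all_order all_algebra.
From mathcomp Require Import polyrcf complex spectral sesquilinear mxred.
From mathcomp Require Import ring lra.
Import Order.TTheory GRing.Theory Num.Theory.
Local Open Scope ring_scope.
Local Open Scope sesquilinear_scope.
Set Implicit Arguments. Unset Strict Implicit. Unset Printing Implicit Defensive.

Lemma char_poly_conjL (F : comNzRingType) n (P Q A : 'M[F]_n) :
  Q *m P = 1%:M -> char_poly (Q *m A *m P) = char_poly A.
Proof.
move=> QP; rewrite /char_poly /char_poly_mx.
have QPp : map_mx polyC Q *m map_mx polyC P = 1%:M.
  by rewrite -map_mxM QP map_mx1.
transitivity (\det (map_mx polyC Q *m ('X%:M - map_mx polyC A) *m map_mx polyC P)).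
  congr (\det _); rewrite mulmxBr mulmxBl -[_ *m 'X%:M *m _]mulmxA -scalar_mxC.
  by rewrite mulmxA QPp mul1mx !map_mxM.
rewrite !det_mulmx mulrAC -det_mulmx.
by rewrite QPp det1 mul1r.
Qed.

Lemma conjR (R : rcfType) (x : R) : (real_complex R x)^* = real_complex R x.
Proof. by apply/CrealP; rewrite complex_real. Qed.

Section Spec.
Variables (R : rcfType) (n : nat) (w : 'I_n -> 'I_n -> R).
Hypothesis wsym : forall u x, w u x = w x u.
Hypothesis dpos : forall u, 0 < wdeg w u.

Definition sqd u := Num.sqrt (wdeg w u).
Lemma sqd_gt0 u : 0 < sqd u. Proof. by rewrite sqrtr_gt0. Qed.
Lemma sqd_sq u : sqd u * sqd u = wdeg w u.
Proof. by rewrite -expr2 sqr_sqrtr // ltW. Qed.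

Definition symm : 'M[R]_n := \matrix_(u, t) (w u t / (sqd u * sqd t)).

Lemma trans_conj : transition w =
  diag_mx (\row_u (sqd u)^-1) *m symm *m diag_mx (\row_u sqd u).
Proof.
apply/matrixP => u t; rewrite mul_mx_diag mul_diag_mx !mxE -sqd_sq.
have := sqd_gt0 u; have := sqd_gt0 t => ht hu.
by field; rewrite ?gt_eqF.
Qed.

Lemma cp_symm : char_poly (transition w) = char_poly symm.
Proof.
rewrite trans_conj char_poly_conjL // mulmx_diag; apply/matrixP => i j.
by rewrite !mxE mulVf // gt_eqF // sqd_gt0.
Qed.

Definition Sc := map_mx (real_complex R) symm.

Lemma Sc_herm : Sc \is hermsymmx.
Proof.
apply/is_hermitianmxP; rewrite expr0 scale1r; apply/matrixP => i j.
by rewrite !mxE conjR wsym [sqd j * _]mulrC.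
Qed.

Definition U := spectralmx Sc.
Definition dd := spectral_diag Sc.
Definition rr i : R := complex.Re (dd 0 i).

Lemma U_unitary : U \is unitarymx. Proof. exact: spectral_unitarymx. Qed.
Lemma UUt : U *m U^t* = 1%:M. Proof. exact/unitarymxP/U_unitary. Qed.
Lemma UtU : U^t* *m U = 1%:M. Proof. exact/mulmx1C/UUt. Qed.

Lemma Sc_spec : Sc = U^t* *m diag_mx dd *m U.
Proof.
rewrite -invmx_unitary ?U_unitary //.
exact/orthomx_spectralP/hermitian_normalmx/Sc_herm.
Qed.

Lemma dd_r i : dd 0 i = real_complex R (rr i).
Proof.
rewrite /rr RRe_real //.
by have /mxOverP := hermitian_spectral_diag_real Sc_herm; apply.
Qed.

Lemma cp_r : char_poly (transition w) = \prod_(i < n) ('X - (rr i)%:P).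
Proof.
apply: (map_poly_inj (real_complex R)).
rewrite cp_symm map_char_poly -/Sc Sc_spec char_poly_conjL ?UtU //.
rewrite char_poly_trig ?diag_mx_is_trig // rmorph_prod; apply: eq_bigr => i _.
by rewrite /= map_polyXsubC mxE eqxx mulr1n dd_r.
Qed.

Definition qf (A : 'M[R[i]]_n) (y : 'rV[R[i]]_n) := (y *m A *m y^t*) 0 0.

Lemma ec_lem (y : 'rV[R[i]]_n) : (y *m U^t*)^t* = U *m y^t*.
Proof. by rewrite trmx_mul map_mxM; congr (_ *m _); exact: trmxCK. Qed.

Lemma qf_spec y (c := y *m U^t*) :
  qf Sc y = \sum_i real_complex R (rr i) * (c 0 i * (c 0 i)^*).
Proof.
rewrite /qf Sc_spec !mulmxA -/c -mulmxA -ec_lem -/c mul_mx_diag !mxE.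
apply: eq_bigr => i _; rewrite !mxE dd_r; ring.
Qed.

Lemma qf1_spec y (c := y *m U^t*) :
  qf 1%:M y = \sum_i c 0 i * (c 0 i)^*.
Proof.
rewrite /qf mulmx1 -{1}[y]mulmx1 -UtU mulmxA -/c -mulmxA -ec_lem -/c !mxE.
by apply: eq_bigr => i _; rewrite !mxE.
Qed.

Lemma qf_x (x : 'rV[R[i]]_n) :
  qf Sc (\row_u (x 0 u * real_complex R (sqd u))) =
  \sum_u \sum_t real_complex R (w u t) * (x 0 u * (x 0 t)^*).
Proof.
rewrite /qf mxE; under eq_bigr do rewrite !mxE big_distrl.
rewrite exchange_big /=; apply: eq_bigr => u _; apply: eq_bigr => t _.
have cj : forall (a : R[i]) (b : R), (a * real_complex R b)^* = a^* * real_complex R b.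
  by move=> a b; rewrite rmorphM /= conjR.
rewrite !mxE cj.
have key : sqd u * (w u t / (sqd u * sqd t)) * sqd t = w u t.
  have := sqd_gt0 u; have := sqd_gt0 t => ht hu.
  by field; rewrite ?gt_eqF.
rewrite -[in RHS]key !rmorphM /=; ring.
Qed.

Lemma qf1_x (x : 'rV[R[i]]_n) :
  qf 1%:M (\row_u (x 0 u * real_complex R (sqd u))) =
  \sum_u real_complex R (wdeg w u) * (x 0 u * (x 0 u)^*).
Proof.
rewrite /qf mulmx1 mxE; apply: eq_bigr => u _.
have cj : forall (a : R[i]) (b : R), (a * real_complex R b)^* = a^* * real_complex R b.
  by move=> a b; rewrite rmorphM /= conjR.
rewrite !mxE cj -sqd_sq rmorphM /=; ring.
Qed.
End Spec.

Section Lap.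
Variables (R : rcfType) (n : nat) (w : 'I_n -> 'I_n -> R).
Hypothesis wsym : forall u x, w u x = w x u.
Hypothesis wnn : forall u x, 0 <= w u x.

Definition Wf (x : 'rV[R[i]]_n) :=
  \sum_u \sum_t real_complex R (w u t) * (x 0 u * (x 0 t)^*).
Definition Df (x : 'rV[R[i]]_n) :=
  \sum_u real_complex R (wdeg w u) * (x 0 u * (x 0 u)^*).

Lemma W_le_D x : Wf x <= Df x.
Proof.
have e : \sum_u \sum_t real_complex R (w u t) * ((x 0 u - x 0 t) * (x 0 u - x 0 t)^*)
         = (Df x - Wf x) *+ 2.
  transitivity (\sum_u \sum_t (real_complex R (w u t) * (x 0 u * (x 0 u)^*) +
                              real_complex R (w u t) * (x 0 t * (x 0 t)^*)) -
                \sum_u \sum_t (real_complex R (w u t) * (x 0 u * (x 0 t)^*) +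
                              real_complex R (w u t) * (x 0 t * (x 0 u)^*))).
    rewrite -sumrB; apply: eq_bigr => u _; rewrite -sumrB; apply: eq_bigr => t _.
    rewrite rmorphB /=; ring.
  have e1 : \sum_u \sum_t real_complex R (w u t) * (x 0 u * (x 0 u)^*) = Df x.
    apply: eq_bigr => u _; rewrite /wdeg rmorph_sum big_distrl /=.
    by apply: eq_bigr.
  have e2 : \sum_u \sum_t real_complex R (w u t) * (x 0 t * (x 0 t)^*) = Df x.
    rewrite exchange_big /=; apply: eq_bigr => u _; rewrite /wdeg rmorph_sum big_distrl /=.
    by apply: eq_bigr => t _; rewrite wsym.
  have e3 : \sum_u \sum_t real_complex R (w u t) * (x 0 t * (x 0 u)^*) = Wf x.
    rewrite exchange_big /=; apply: eq_bigr => u _; apply: eq_bigr => t _.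
    by rewrite wsym.
  have sp : forall F G : 'I_n -> 'I_n -> R[i],
      \sum_u \sum_t (F u t + G u t) = \sum_u \sum_t F u t + \sum_u \sum_t G u t.
    by move=> F G; rewrite -big_split; apply: eq_bigr => u _; rewrite big_split.
  rewrite !sp e1 e2 e3 -/(Wf x) mulr2n; ring.
have : 0 <= (Df x - Wf x) *+ 2.
  rewrite -e; apply: sumr_ge0 => u _; apply: sumr_ge0 => t _.
  by apply: mulr_ge0; [rewrite ler0c | exact: mul_conjC_ge0].
by rewrite pmulrn_lge0 // subr_ge0.
Qed.
End Lap.
Lemma mup_prod_XsubC (F : fieldType) (s : seq F) y :
  mup y (\prod_(x <- s) ('X - x%:P)) = count_mem y s.
Proof.
elim: s => [|x s IH]; first by rewrite big_nil mupNroot // root1.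
rewrite big_cons mupM ?monic_neq0 ?monicXsubC ?monic_prod_XsubC // IH /=.
by rewrite -['X - x%:P]expr1 mup_XsubCX; case: (x == y).
Qed.

Lemma count_flatten_nseq (T : eqType) (rs : seq T) (f : T -> nat) y :
  uniq rs -> count_mem y (flatten [seq nseq (f x) x | x <- rs]) =
             if y \in rs then f y else 0%N.
Proof.
elim: rs => //= x rs IH /andP[xn u]; rewrite count_cat count_nseq IH // in_cons.
case: (eqVneq y x) => [->|ne] /=; first by rewrite eqxx (negPf xn) mul1n addn0.
by rewrite eq_sym (negPf ne) mul0n.
Qed.

Lemma eigen_perm (R : rcfType) n (A : 'M[R]_n) (r : 'I_n -> R) :
  char_poly A = \prod_(i < n) ('X - (r i)%:P) ->
  perm_eq (eigenvalues A) [seq r i | i <- enum 'I_n].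
Proof.
move=> cpA.
have cpA' : char_poly A = \prod_(x <- [seq r i | i <- enum 'I_n]) ('X - x%:P).
  by rewrite big_map big_enum.
rewrite /eigenvalues; apply/allP => y _; apply/eqP.
have pn0 : char_poly A != 0 by rewrite monic_neq0 // char_poly_monic.
rewrite count_flatten_nseq ?uniq_roots // -mup_prod_XsubC -cpA'.
have := roots_on_rootsR pn0 y; rewrite /= => <-.
by case: (boolP (root _ y)) => // /mupNroot ->.
Qed.
Lemma count_card (T : finType) (P : pred T) : count P (enum T) = #|P|.
Proof. by rewrite cardE /enum_mem size_filter count_filter; apply: eq_count => x; rewrite /= andbT. Qed.

Section Sorted.
Variable R : realDomainType.
Definition geR := fun x y : R => y <= x.
Lemma geR_total : total geR. Proof. by move=> x y; rewrite /geR le_total. Qed.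
Lemma geR_trans : transitive geR. Proof. by move=> x y z /= h1 h2; apply: le_trans h2 h1. Qed.

Variables (n : nat) (r : 'I_n -> R).
Let s := sort geR [seq r i | i <- enum 'I_n].

Lemma s_perm : perm_eq s [seq r i | i <- enum 'I_n].
Proof. by rewrite /s perm_sort. Qed.

Lemma s_size : size s = n.
Proof. by rewrite /s size_sort size_map size_enum_ord. Qed.

Lemma s_sorted : sorted geR s.
Proof. exact: (sort_sorted geR_total). Qed.

Lemma s_count (P : pred R) : count P s = #|[pred i | P (r i)]|.
Proof. by rewrite (permP s_perm) count_map count_card. Qed.

Lemma lambda2_low : (1 < n)%N ->
  exists i1 i2, [/\ i1 != i2, nth (0:R) s 1%N <= r i1 & nth (0:R) s 1%N <= r i2].
Proof.
move=> n2.
have : (1 < count (fun x : R => (nth (0:R) s 1%N <= x)%R) s)%N.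
  have := s_sorted; have := s_size.
  case: s => [|a [|b l]] /= sz; rewrite -sz in n2 => //.
  by move=> /andP[ba _]; rewrite /geR in ba; rewrite ba lexx.
rewrite s_count => /card_gt1P [i1 [i2 [h1 h2 h3]]].
by exists i1, i2.
Qed.

Lemma lambda2_up : (0 < n)%N ->
  exists j1, forall i, i != j1 -> r i <= nth (0:R) s 1%N.
Proof.
move=> n1.
have := s_sorted; have := s_size; have := s_count.
have : forall x, x \in s -> x \in [seq r i | i <- enum 'I_n] by move=> x; rewrite (perm_mem s_perm).
have : forall x, x \in [seq r i | i <- enum 'I_n] -> x \in s by move=> x; rewrite (perm_mem s_perm).
case: s => [|a l]; first by move=> _ _ _ sz; rewrite -sz in n1.
move=> mems' mems cnt _ srt.
have /mapP [j1 _ ej1] := mems a (mem_head _ _).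
have alla : all (geR a) l by apply: order_path_min => //; exact: geR_trans.
have cntl0 : forall l0 : seq R, path geR a l0 ->
    count (fun x : R => (nth (0:R) (a :: l0) 1%N < x)%R) l0 = 0%N.
  case=> [|b l'] //= /andP[_ srt'].
  rewrite ltxx /=; apply/eqP; rewrite -leqn0 leqNgt -has_count; apply/hasPn => x xl.
  have /allP /(_ x xl) := order_path_min geR_trans srt'.
  by rewrite /geR leNgt => ->.
have cntl := cntl0 l srt.
have le1 : (#|[pred i | (nth (0:R) (a :: l) 1%N < r i)%R]| <= 1)%N.
  by rewrite -cnt /= cntl addn0; case: (_ < a).
exists j1 => i ij; rewrite leNgt; apply/negP => lt.
have ria : r i <= a.
  have : r i \in a :: l.
    by apply: mems'; apply: map_f; rewrite mem_enum.
  rewrite in_cons => /orP[/eqP -> //|xl].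
  by have /allP /(_ _ xl) := alla.
have ltj : nth (0:R) (a :: l) 1%N < r j1 by rewrite -ej1; exact: lt_le_trans lt ria.
move/card_le1_eqP: le1 => /(_ i j1 lt ltj) eij.
by rewrite eij eqxx in ij.
Qed.
End Sorted.
Section Helpers.
Variables (R : rcfType) (n : nat).

Lemma sum_lb (s : R) (d : 'I_n -> R) (c : 'rV[R[i]]_n) :
  (forall i, c 0 i = 0 \/ s <= d i) ->
  real_complex R s * \sum_i (c 0 i * (c 0 i)^*) <=
  \sum_i real_complex R (d i) * (c 0 i * (c 0 i)^*).
Proof.
move=> h; rewrite mulr_sumr; apply: ler_sum => i _.
case: (h i) => [->|le]; first by rewrite !mul0r !mulr0.
by apply: ler_wpM2r; [exact: mul_conjC_ge0 | rewrite lecR].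
Qed.

Lemma sum_ub (s : R) (d : 'I_n -> R) (c : 'rV[R[i]]_n) :
  (forall i, c 0 i = 0 \/ d i <= s) ->
  \sum_i real_complex R (d i) * (c 0 i * (c 0 i)^*) <=
  real_complex R s * \sum_i (c 0 i * (c 0 i)^*).
Proof.
move=> h; rewrite mulr_sumr; apply: ler_sum => i _.
case: (h i) => [->|le]; first by rewrite !mul0r !mulr0.
by apply: ler_wpM2r; [exact: mul_conjC_ge0 | rewrite lecR].
Qed.

Lemma sum_cc_gt0 (c : 'rV[R[i]]_n) i : c 0 i != 0 ->
  0 < \sum_j c 0 j * (c 0 j)^*.
Proof.
move=> ci; rewrite (bigD1 i) //=.
apply: (lt_le_trans (_ : 0 < c 0 i * (c 0 i)^*)); first by rewrite mul_conjC_gt0.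
by rewrite lerDl; apply: sumr_ge0 => j _; exact: mul_conjC_ge0.
Qed.

Lemma dbl_sum_pick (v : 'I_n) (F : 'I_n -> 'I_n -> R[i]) :
  \sum_u \sum_t (if (u == v) && (t == v) then F u t else 0) = F v v.
Proof.
rewrite (bigD1 v) //= [X in _ + X]big1 => [|u uv]; last first.
  by apply: big1 => t _; rewrite (negPf uv).
rewrite addr0 (bigD1 v) //= eqxx [X in _ + X]big1 ?addr0 // => t tv.
by rewrite (negPf tv).
Qed.
End Helpers.

Lemma lambda2_sort (R : rcfType) n (w : 'I_n -> 'I_n -> R) :
  (forall u x, w u x = w x u) -> (forall u, 0 < wdeg w u) ->
  lambda2 (transition w) = nth 0 (sort (@geR R) [seq rr w i | i <- enum 'I_n]) 1.
Proof.
move=> ws dp; rewrite /lambda2; congr nth.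
apply/perm_sortP; [exact: geR_total | exact: geR_trans | |].
  by move=> x y /andP[h1 h2]; apply/le_anti; rewrite h1 h2.
exact/eigen_perm/cp_r.
Qed.

Section Main.
Variables (R : rcfType) (n : nat) (w0 w1 : 'I_n -> 'I_n -> R) (v : 'I_n).
Hypotheses (w0s : forall u x, w0 u x = w0 x u) (w1s : forall u x, w1 u x = w1 x u).
Hypotheses (w0n : forall u x, 0 <= w0 u x) (w1n : forall u x, 0 <= w1 u x).
Hypotheses (d0p : forall u, 0 < wdeg w0 u) (d1p : forall u, 0 < wdeg w1 u).
Hypothesis hvv : w0 v v < w1 v v.
Hypothesis heq : forall u x, (u, x) != (v, v) -> w0 u x = w1 u x.

Let del := w1 v v - w0 v v.
Lemma del_gt0 : 0 < del. Proof. by rewrite subr_gt0. Qed.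

Lemma w1E u t : w1 u t = w0 u t + (if (u == v) && (t == v) then del else 0).
Proof.
case: (boolP ((u == v) && (t == v))) => [/andP[/eqP -> /eqP ->]|h].
  by rewrite /del addrC subrK.
by rewrite addr0 heq // xpair_eqE.
Qed.

Lemma d1E u : wdeg w1 u = wdeg w0 u + (if u == v then del else 0).
Proof.
rewrite /wdeg; under eq_bigr do rewrite w1E; rewrite big_split /=; congr (_ + _).
case: (eqVneq u v) => [e|uv] /=.
  by subst u; rewrite -big_mkcond /= big_pred1_eq.
by rewrite big1 // => t _; rewrite (negPf uv).
Qed.

Lemma W1E x : Wf w1 x = Wf w0 x + real_complex R del * (x 0 v * (x 0 v)^*).
Proof.
rewrite /Wf -(dbl_sum_pick v (fun u t => real_complex R del * (x 0 u * (x 0 t)^*))).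
rewrite -big_split /=; apply: eq_bigr => u _; rewrite -big_split /=.
apply: eq_bigr => t _; rewrite w1E rmorphD /= mulrDl.
by case: ifP; rewrite ?rmorph0 ?mul0r.
Qed.

Lemma D1E x : Df w1 x = Df w0 x + real_complex R del * (x 0 v * (x 0 v)^*).
Proof.
rewrite /Df (bigD1 v) //= [in RHS](bigD1 v) //= d1E eqxx rmorphD /= mulrDl.
rewrite -!addrA; congr (_ + _); rewrite addrC; congr (_ + _).
by apply: eq_bigr => u /negPf uv; rewrite d1E uv addr0.
Qed.

Lemma cross x : Wf w0 x * Df w1 x <= Wf w1 x * Df w0 x.
Proof.
rewrite W1E D1E -subr_ge0.
have -> : (Wf w0 x + real_complex R del * (x 0 v * (x 0 v)^*)) * Df w0 x -
   Wf w0 x * (Df w0 x + real_complex R del * (x 0 v * (x 0 v)^*)) =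
   real_complex R del * (x 0 v * (x 0 v)^*) * (Df w0 x - Wf w0 x) by ring.
apply: mulr_ge0; first apply: mulr_ge0.
- by rewrite ler0c ltW // del_gt0.
- exact: mul_conjC_ge0.
- by rewrite subr_ge0 W_le_D.
Qed.

Lemma D0_le_D1 x : Df w0 x <= Df w1 x.
Proof.
rewrite D1E lerDl; apply: mulr_ge0; last exact: mul_conjC_ge0.
by rewrite ler0c ltW // del_gt0.
Qed.


Lemma main_ineq : lambda2 (transition w0) <= lambda2 (transition w1).
Proof.
rewrite (lambda2_sort w0s d0p) (lambda2_sort w1s d1p).
case: (ltnP 1 n) => [n2|n1]; last first.
  by rewrite !nth_default ?lexx // size_sort size_map size_enum_ord.
have [i1 [i2 [i12 hi1 hi2]]] := lambda2_low (rr w0) n2.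
have [j1 hj1] := lambda2_up (rr w1) (ltnW n2).
set t0 := nth _ _ _ in hi1 hi2 *; set t1 := nth _ _ _ in hj1 *.
pose rat := \row_u real_complex R (sqd w1 u / sqd w0 u).
pose B := U w0 *m diag_mx rat *m (U w1)^t*.
pose a := B i1 j1; pose b := B i2 j1.
pose al := if (a == 0) && (b == 0) then 1 else b.
pose be := if (a == 0) && (b == 0) then 0 else - a.
pose c0 : 'rV[R[i]]_n := \row_i (if i == i1 then al else if i == i2 then be else 0).
pose y0 := c0 *m U w0.
pose x := \row_u (y0 0 u / real_complex R (sqd w0 u)).
have sq0 : forall u, real_complex R (sqd w0 u) != 0.
  by move=> u; rewrite fmorph_eq0 gt_eqF // sqd_gt0.
have ey0 : \row_u (x 0 u * real_complex R (sqd w0 u)) = y0.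
  by apply/rowP => u; rewrite !mxE divfK.
have ey1 : \row_u (x 0 u * real_complex R (sqd w1 u)) = y0 *m diag_mx rat.
  apply/rowP => u; rewrite mul_mx_diag !mxE rmorphM fmorphV /=.
  by field; rewrite sq0.
have ec0 : y0 *m (U w0)^t* = c0 by rewrite /y0 -mulmxA UUt mulmx1.
have ec1 : (y0 *m diag_mx rat) *m (U w1)^t* = c0 *m B by rewrite /B /y0 !mulmxA.
have hA : real_complex R t0 * Df w0 x <= Wf w0 x.
  rewrite /Df -(qf1_x d0p) ey0 /Wf -(qf_x d0p) ey0.
  rewrite (qf1_spec w0 y0) (qf_spec w0s y0) /= ec0.
  apply: sum_lb => i; rewrite mxE.
  case: (eqVneq i i1) => [->|_]; first by right.
  case: (eqVneq i i2) => [->|_]; [by right | by left].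
have hc1 : (c0 *m B) 0 j1 = 0.
  have i21 : i2 != i1 by rewrite eq_sym.
  rewrite mxE (bigD1 i1) //= (bigD1 i2) /=; last by [].
  rewrite big1 => [|i /andP[ni1 ni2]]; last first.
    by rewrite mxE (negPf ni1) (negPf ni2) mul0r.
  have c0i1 : c0 0 i1 = al by rewrite mxE eqxx.
  have c0i2 : c0 0 i2 = be by rewrite mxE (negPf i21) eqxx.
  rewrite c0i1 c0i2 addr0 -/a -/b /al /be.
  case: ifP => [/andP[ha _]|_]; last by ring.
  by rewrite mul1r mul0r addr0; apply/eqP.
have hB : Wf w1 x <= real_complex R t1 * Df w1 x.
  rewrite /Df -(qf1_x d1p) ey1 /Wf -(qf_x d1p) ey1.
  rewrite (qf1_spec w1) (qf_spec w1s) /= ec1.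
  apply: sum_ub => i.
  case: (eqVneq i j1) => [->|ne]; [by left | right; exact: hj1].
have hD0 : 0 < Df w0 x.
  rewrite /Df -(qf1_x d0p) ey0 (qf1_spec w0) /= ec0.
  have i21 : i2 != i1 by rewrite eq_sym.
  have c0i1 : c0 0 i1 = al by rewrite mxE eqxx.
  have c0i2 : c0 0 i2 = be by rewrite mxE (negPf i21) eqxx.
  case E: ((a == 0) && (b == 0)).
    by apply: (@sum_cc_gt0 _ _ _ i1); rewrite c0i1 /al E oner_neq0.
  case: (eqVneq b 0) => [hb|hb].
    apply: (@sum_cc_gt0 _ _ _ i2); rewrite c0i2 /be E oppr_eq0.
    by move: E; rewrite hb eqxx andbT => ->.
  by apply: (@sum_cc_gt0 _ _ _ i1); rewrite c0i1 /al E.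
have hD1 : 0 < Df w1 x := lt_le_trans hD0 (D0_le_D1 x).
have hx := cross x.
have h : real_complex R t0 * (Df w0 x * Df w1 x) <=
         real_complex R t1 * (Df w0 x * Df w1 x).
  apply: (le_trans (y := Wf w0 x * Df w1 x)).
    rewrite mulrA; exact: (ler_wpM2r (ltW hD1) hA).
  apply: (le_trans hx); rewrite [Df w0 x * _]mulrC mulrA.
  exact: (ler_wpM2r (ltW hD0) hB).
by move: h; rewrite ler_pM2r ?mulr_gt0 // lecR.
Qed.
End Main.

Theorem claim2p7 (R : rcfType) (n : nat) (G : rel 'I_n)
    (w0 w1 : 'I_n -> 'I_n -> R) (v : 'I_n) :
  sym_graph G -> connected_graph G ->
  is_network G w0 -> is_network G w1 ->
  w0 v v < w1 v v ->
  (forall u x, (u, x) != (v, v) -> w0 u x = w1 u x) ->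
  spectral_gap w1 <= spectral_gap w0.
Proof.
move=> _ _ [w0s w0n _ d0p] [w1s w1n _ d1p] hvv heq.
rewrite /spectral_gap lerD2l lerN2.
by apply: (main_ineq (v:=v)).
Qed.
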